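(* Let $f:\mathbb{R}\to\mathbb{R}$ be a Topologically Anosov homeomorphism. Then $f$ has exactly one fixed point.
   Context: A homeomorphism $f:\mathbb{R}\to\mathbb{R}$ is Topologically Anosov if: (i) there is a continuous strictly positive $\epsilon:\mathbb{R}\to\mathbb{R}$ such that for all $x\neq y$ there is $k\in\mathbb{Z}$ with $|f^k(x)-f^k(y)|>\epsilon(f^k(x))$; and (ii) for every continuous strictly positive $\epsilon:\mathbb{R}\to\mathbb{R}$ there is a continuous strictly positive $\delta:\mathbb{R}\to\mathbb{R}$ such that every $\delta$-pseudo-orbit (a sequence $(x_n)_{n\in\mathbb{Z}}$ with $|f(x_n)-x_{n+1}|<\delta(f(x_n))$) is $\epsilon$-shadowed by an orbit (there is $x$ with $|x_n-f^n(x)|<\epsilon(x_n)$ for all $n$). *)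

(* Defs.v *)
From Stdlib Require Import Reals ZArith.
Open Scope R_scope.

Definition homeo_with_inverse (f g : R -> R) : Prop :=
  continuity f /\ continuity g /\
  (forall x, g (f x) = x) /\ (forall x, f (g x) = x).

Definition iterZ (f g : R -> R) (k : Z) (x : R) : R :=
  match k with
  | Z0 => x
  | Zpos p => Nat.iter (Pos.to_nat p) f x
  | Zneg p => Nat.iter (Pos.to_nat p) g x
  end.

Definition pos_cont_fun (e : R -> R) : Prop :=
  continuity e /\ forall x, 0 < e x.

Definition expansive_TA (f g : R -> R) : Prop :=
  exists eps : R -> R, pos_cont_fun eps /\
    forall x y, x <> y -> exists k : Z,
      Rabs (iterZ f g k x - iterZ f g k y) > eps (iterZ f g k x).

Definition shadowing_TA (f g : R -> R) : Prop :=
  forall eps : R -> R, pos_cont_fun eps ->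
    exists delta : R -> R, pos_cont_fun delta /\
      forall xs : Z -> R,
        (forall n : Z, Rabs (f (xs n) - xs (n + 1)%Z) < delta (f (xs n))) ->
        exists x : R, forall n : Z, Rabs (xs n - iterZ f g n x) < eps (xs n).

Definition topologically_anosov (f g : R -> R) : Prop :=
  expansive_TA f g /\ shadowing_TA f g.

(* Main.v *)
Require Import Defs.
From Stdlib Require Import Reals ZArith Lra Lia ClassicalEpsilon Classical.
Open Scope R_scope.
Lemma cont_to_ed h x : continuity_pt h x -> forall e, 0 < e ->
  exists d, 0 < d /\ forall y, Rabs (y - x) < d -> Rabs (h y - h x) < e.
Proof.
  intros H e He. destruct (H e He) as [d [Hd Hy]]. exists d. split; [lra|].
  intros y Hyx. destruct (Req_dec y x) as [->|Hne].
  - rewrite Rminus_diag, Rabs_R0. lra.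
  - apply (Hy y). split; [split; [exact I| auto]| exact Hyx].
Qed.
Lemma ed_to_cont h x : (forall e, 0 < e ->
  exists d, 0 < d /\ forall y, Rabs (y - x) < d -> Rabs (h y - h x) < e) -> continuity_pt h x.
Proof.
  intros H e He. destruct (H e He) as [d [Hd Hy]]. exists d. split; [lra|].
  intros y [_ Hyx]. apply Hy. exact Hyx.
Qed.
Lemma cont_id : continuity (fun x => x).
Proof. intro x. apply ed_to_cont. intros e He. exists e. split; auto. Qed.

Section Iter.
Variables f g : R -> R.
Hypothesis gf : forall x, g (f x) = x.
Hypothesis fg : forall x, f (g x) = x.

Lemma iterZ_pos_nat n x : iterZ f g (Z.of_nat n) x = Nat.iter n f x.
Proof. destruct n; simpl; [reflexivity|]. rewrite SuccNat2Pos.id_succ; reflexivity. Qed.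

Lemma iterZ_neg_nat n x : iterZ f g (- Z.of_nat n) x = Nat.iter n g x.
Proof. destruct n; simpl; [reflexivity|]. rewrite SuccNat2Pos.id_succ; reflexivity. Qed.

Lemma Z_nat_cases (z : Z) : exists n, z = Z.of_nat n \/ z = (- Z.of_nat n)%Z.
Proof. exists (Z.abs_nat z). lia. Qed.

Lemma iterZ_succ z x : iterZ f g (z + 1) x = f (iterZ f g z x).
Proof.
  destruct (Z_nat_cases z) as [n [-> | ->]].
  - replace (Z.of_nat n + 1)%Z with (Z.of_nat (S n)) by lia.
    rewrite !iterZ_pos_nat. reflexivity.
  - destruct n as [|n].
    + simpl. reflexivity.
    + replace (- Z.of_nat (S n) + 1)%Z with (- Z.of_nat n)%Z by lia.
      rewrite !iterZ_neg_nat. simpl. rewrite fg. reflexivity.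
Qed.

Lemma iterZ_pred z x : iterZ f g (z - 1) x = g (iterZ f g z x).
Proof.
  replace z with ((z - 1) + 1)%Z at 2 by lia. rewrite iterZ_succ, gf. reflexivity.
Qed.

Lemma iterZ_add m n x : iterZ f g (m + n) x = iterZ f g m (iterZ f g n x).
Proof.
  induction m using Z.peano_ind.
  - reflexivity.
  - replace (Z.succ m + n)%Z with ((m + n) + 1)%Z by lia.
    unfold Z.succ. rewrite !iterZ_succ, IHm. reflexivity.
  - replace (Z.pred m + n)%Z with ((m + n) - 1)%Z by lia.
    unfold Z.pred. replace (m + -1)%Z with (m - 1)%Z by lia.
    rewrite !iterZ_pred, IHm. reflexivity.
Qed.

Lemma iterZ_0 x : iterZ f g 0 x = x.
Proof. reflexivity. Qed.

Lemma iterZ_1 x : iterZ f g 1 x = f x.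
Proof. reflexivity. Qed.

Lemma iterZ_inv n x : iterZ f g (- n) (iterZ f g n x) = x.
Proof. rewrite <- iterZ_add. replace (- n + n)%Z with 0%Z by lia. reflexivity. Qed.

Lemma iterZ_fix n x : f x = x -> iterZ f g n x = x.
Proof.
  intro H. induction n using Z.peano_ind.
  - reflexivity.
  - unfold Z.succ. rewrite iterZ_succ, IHn. exact H.
  - unfold Z.pred. replace (n + -1)%Z with (n - 1)%Z by lia.
    rewrite iterZ_pred, IHn. rewrite <- H at 1. apply gf.
Qed.

Lemma iter_nat_cont (h : R -> R) n : continuity h -> continuity (fun x => Nat.iter n h x).
Proof.
  intro Hh. induction n; simpl.
  - apply cont_id.
  - apply (continuity_comp (fun x => Nat.iter n h x) h IHn Hh).
Qed.

Lemma iterZ_cont n : continuity f -> continuity g -> continuity (iterZ f g n).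
Proof.
  intros Hf Hg. destruct n; unfold iterZ.
  - apply cont_id.
  - apply iter_nat_cont; auto.
  - apply iter_nat_cont; auto.
Qed.

End Iter.

Lemma Rmin_lip a b c d : Rabs (Rmin a b - Rmin c d) <= Rmax (Rabs (a - c)) (Rabs (b - d)).
Proof.
  apply Rabs_le. pose proof (Rmax_l (Rabs (a - c)) (Rabs (b - d))).
  pose proof (Rmax_r (Rabs (a - c)) (Rabs (b - d))).
  pose proof (Rle_abs (a-c)). pose proof (Rle_abs (b-d)).
  pose proof (Rle_abs (-(a-c))). pose proof (Rle_abs (-(b-d))). rewrite Rabs_Ropp in *.
  unfold Rmin. repeat destruct Rle_dec; lra.
Qed.

Lemma cont_min h1 h2 : continuity h1 -> continuity h2 -> continuity (fun x => Rmin (h1 x) (h2 x)).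
Proof.
  intros H1 H2 x. apply ed_to_cont. intros e He.
  destruct (cont_to_ed _ _ (H1 x) e He) as [d1 [Hd1 P1]].
  destruct (cont_to_ed _ _ (H2 x) e He) as [d2 [Hd2 P2]].
  exists (Rmin d1 d2). split. { apply Rmin_pos; auto. }
  intros y Hy. eapply Rle_lt_trans. apply Rmin_lip.
  unfold Rmax. destruct Rle_dec.
  - apply P2. eapply Rlt_le_trans; [exact Hy| apply Rmin_r].
  - apply P1. eapply Rlt_le_trans; [exact Hy| apply Rmin_l].
Qed.

Lemma cont_dist c p : continuity (fun z => c + Rabs (z - p)).
Proof.
  intro x. apply ed_to_cont. intros e He. exists e. split; auto.
  intros y Hy. replace (c + Rabs (y - p) - (c + Rabs (x - p))) with (Rabs (y - p) - Rabs (x - p)) by ring.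
  eapply Rle_lt_trans. apply Rabs_triang_inv2. replace (y - p - (x - p)) with (y - x) by ring. exact Hy.
Qed.

Section Psi.
Variables (p e : Z -> R).
Hypothesis epos : forall n, 0 < e n.

Fixpoint psi (N : nat) (z : R) : R :=
  match N with
  | O => Rmin 1 (e 0%Z + Rabs (z - p 0%Z))
  | S M => Rmin (psi M z)
      (Rmin (e (Z.of_nat (S M)) + Rabs (z - p (Z.of_nat (S M))))
            (e (- Z.of_nat (S M))%Z + Rabs (z - p (- Z.of_nat (S M))%Z)))
  end.

Lemma psi_S M z : psi (S M) z = Rmin (psi M z)
      (Rmin (e (Z.of_nat (S M)) + Rabs (z - p (Z.of_nat (S M))))
            (e (- Z.of_nat (S M))%Z + Rabs (z - p (- Z.of_nat (S M))%Z))).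
Proof. reflexivity. Qed.

Lemma psi_cont N : continuity (psi N).
Proof.
  induction N; simpl.
  - apply cont_min. intro x; apply ed_to_cont; intros eps He; exists 1; split; [lra|].
    intros; rewrite Rminus_diag, Rabs_R0; auto. apply cont_dist.
  - apply cont_min; [exact IHN|]. apply cont_min; apply cont_dist.
Qed.

Lemma term_pos n z : 0 < e n + Rabs (z - p n).
Proof. pose proof (epos n); pose proof (Rabs_pos (z - p n)); lra. Qed.

Lemma psi_pos N z : 0 < psi N z.
Proof.
  induction N; simpl.
  - apply Rmin_pos; [lra| apply term_pos].
  - apply Rmin_pos; [auto| apply Rmin_pos; apply term_pos].
Qed.

Lemma psi_le1 N z : psi N z <= 1.
Proof.
  induction N; simpl.
  - apply Rmin_l.
  - eapply Rle_trans; [apply Rmin_l| auto].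
Qed.

Lemma psi_le N z n : (Z.abs n <= Z.of_nat N)%Z -> psi N z <= e n + Rabs (z - p n).
Proof.
  induction N; intro Hn.
  - simpl. assert (n = 0%Z) by lia. subst. apply Rmin_r.
  - destruct (Z.eq_dec (Z.abs n) (Z.of_nat (S N))) as [Heq|Hne].
    + simpl. eapply Rle_trans; [apply Rmin_r|].
      destruct (Z.abs_spec n) as [[_ H]|[_ H]].
      * replace n with (Z.of_nat (S N)) by lia. apply Rmin_l.
      * replace n with (- Z.of_nat (S N))%Z by lia. apply Rmin_r.
    + simpl. eapply Rle_trans; [apply Rmin_l|]. apply IHN. lia.
Qed.

Lemma psi_stab N z : (forall n, (Z.of_nat N < Z.abs n)%Z -> 1 <= Rabs (z - p n)) ->
  forall k, psi (N + k) z = psi N z.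
Proof.
  intros H k. induction k.
  - rewrite Nat.add_0_r. reflexivity.
  - rewrite Nat.add_succ_r. rewrite psi_S, IHk.
    pose proof (psi_le1 N z).
    assert (H1 : 1 <= e (Z.of_nat (S (N + k))) + Rabs (z - p (Z.of_nat (S (N + k))))).
    { pose proof (epos (Z.of_nat (S (N + k)))). pose proof (H (Z.of_nat (S (N + k))) ltac:(lia)). lra. }
    assert (H2 : 1 <= e (- Z.of_nat (S (N + k)))%Z + Rabs (z - p (- Z.of_nat (S (N + k)))%Z)).
    { pose proof (epos (- Z.of_nat (S (N + k)))%Z). pose proof (H (- Z.of_nat (S (N + k)))%Z ltac:(lia)). lra. }
    unfold Rmin at 2. destruct Rle_dec.
    + unfold Rmin. destruct Rle_dec; lra.
    + unfold Rmin. destruct Rle_dec; lra.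
Qed.

Hypothesis escape : forall K, exists N : nat, forall n : Z, (Z.of_nat N < Z.abs n)%Z -> K < Rabs (p n).

Lemma escape_near z0 : exists N : nat, forall z, Rabs (z - z0) < 1 ->
  forall n, (Z.of_nat N < Z.abs n)%Z -> 1 <= Rabs (z - p n).
Proof.
  destruct (escape (Rabs z0 + 2)) as [N HN]. exists N. intros z Hz n Hn.
  specialize (HN n Hn).
  pose proof (Rabs_triang_inv (p n) z). pose proof (Rabs_triang_inv z z0).
  rewrite <- Rabs_Ropp. replace (- (z - p n)) with (p n - z) by ring. lra.
Qed.

Lemma small_at_points : exists phi, continuity phi /\ (forall z, 0 < phi z) /\ (forall n, phi (p n) <= e n).
Proof.
  set (M := fun z => proj1_sig (constructive_indefinite_description _ (escape_near z))).
  assert (HM : forall z z', Rabs (z' - z) < 1 -> forall n, (Z.of_nat (M z) < Z.abs n)%Z -> 1 <= Rabs (z' - p n)).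
  { intros z. unfold M. destruct constructive_indefinite_description as [N HN]. simpl. exact HN. }
  assert (Hself : forall z n, (Z.of_nat (M z) < Z.abs n)%Z -> 1 <= Rabs (z - p n)).
  { intros z n Hn. apply (HM z z); auto. rewrite Rminus_diag, Rabs_R0; lra. }
  exists (fun z => psi (M z) z). split; [|split].
  - intro z0. apply ed_to_cont. intros eps Heps.
    destruct (cont_to_ed _ _ (psi_cont (M z0) z0) eps Heps) as [d [Hd Hpd]].
    exists (Rmin d 1). split. { apply Rmin_pos; lra. }
    intros y Hy.
    assert (Hy1 : Rabs (y - z0) < 1) by (eapply Rlt_le_trans; [exact Hy| apply Rmin_r]).
    assert (Hyd : Rabs (y - z0) < d) by (eapply Rlt_le_trans; [exact Hy| apply Rmin_l]).
    assert (E : psi (M y) y = psi (M z0) y).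
    { destruct (Nat.le_ge_cases (M y) (M z0)) as [Hle|Hle].
      - replace (M z0) with (M y + (M z0 - M y))%nat by lia.
        rewrite psi_stab; auto.
      - replace (M y) with (M z0 + (M y - M z0))%nat by lia.
        rewrite psi_stab; [reflexivity|]. intros n Hn. apply (HM z0 y); auto. }
    rewrite E. apply Hpd. exact Hyd.
  - intro z. apply psi_pos.
  - intro n. set (N := Nat.max (M (p n)) (Z.abs_nat n)).
    assert (E : psi N (p n) = psi (M (p n)) (p n)).
    { unfold N. replace (Nat.max (M (p n)) (Z.abs_nat n)) with (M (p n) + (Nat.max (M (p n)) (Z.abs_nat n) - M (p n)))%nat by lia.
      apply psi_stab. intros m Hm. apply Hself. exact Hm. }
    rewrite <- E. eapply Rle_trans. apply (psi_le N (p n) n). unfold N. lia.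
    rewrite Rminus_diag, Rabs_R0. lra.
Qed.
End Psi.

Lemma sign_const h : continuity h -> (forall y, h y <> y) ->
  (forall y, y < h y) \/ (forall y, h y < y).
Proof.
  intros Hc Hn.
  assert (Hk : continuity (fun x => h x - x)) by (apply continuity_minus; [exact Hc| apply cont_id]).
  assert (Hsg : forall y z, y < h y -> h z < z -> False).
  { intros y z Hy Hz.
    destruct (Rle_dec y z) as [Hyz|Hyz].
    - destruct (IVT_cor (fun x => h x - x) y z Hk Hyz) as [w [_ Hw]].
      { assert (0 < h y - y) by lra. assert (h z - z < 0) by lra.
        assert ((h y - y) * (h z - z) < 0). { apply Rmult_pos_neg; auto. } lra. }
      apply (Hn w). lra.
    - destruct (IVT_cor (fun x => h x - x) z y Hk ltac:(lra)) as [w [_ Hw]].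
      { assert (0 < h y - y) by lra. assert (h z - z < 0) by lra.
        assert ((h z - z) * (h y - y) < 0). { apply Rmult_neg_pos; auto. } lra. }
      apply (Hn w). lra. }
  destruct (Rlt_dec 0 (h 0)) as [H0|H0].
  - left. intro y. destruct (Rlt_dec y (h y)); auto.
    exfalso. apply (Hsg 0 y); [lra|]. pose proof (Hn y). lra.
  - right. intro y. destruct (Rlt_dec (h y) y); auto.
    exfalso. apply (Hsg y 0); [|pose proof (Hn 0); lra]. pose proof (Hn y). lra.
Qed.

Lemma fix_of_cv h (u : nat -> R) l : continuity h -> (forall n, u (S n) = h (u n)) -> Un_cv u l -> h l = l.
Proof.
  intros Hc Hu Hl.
  assert (H1 : Un_cv (fun n => h (u n)) (h l)) by (apply continuity_seq; auto).
  assert (H2 : Un_cv (fun n => h (u n)) l).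
  { intros eps He. destruct (Hl eps He) as [N HN]. exists N. intros n Hn.
    rewrite <- Hu. apply HN. lia. }
  eapply UL_sequence; eauto.
Qed.

Lemma L1 h : continuity h -> (forall y, y < h y) -> forall x K, exists k, forall j, (k <= j)%nat -> K < Nat.iter j h x.
Proof.
  intros Hc Hy x K.
  assert (Mono : forall j j', (j <= j')%nat -> Nat.iter j h x <= Nat.iter j' h x).
  { intros j j' Hj. induction Hj; [lra|]. simpl. pose proof (Hy (Nat.iter m h x)). lra. }
  destruct (classic (exists k, K < Nat.iter k h x)) as [[k Hk]|Hno].
  - exists k. intros j Hj. pose proof (Mono k j Hj). lra.
  - exfalso.
    assert (Hb : forall k, Nat.iter k h x <= K).
    { intro k. destruct (Rle_dec (Nat.iter k h x) K); auto. exfalso. apply Hno. exists k. lra. }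
    destruct (growing_cv (fun n => Nat.iter n h x)) as [l Hl].
    + intro n. simpl. pose proof (Hy (Nat.iter n h x)). lra.
    + exists K. intros z [i ->]. apply Hb.
    + pose proof (fix_of_cv h (fun n => Nat.iter n h x) l Hc (fun n => eq_refl) Hl).
      pose proof (Hy l). lra.
Qed.

Lemma L2 h : continuity h -> (forall y, h y < y) -> forall x K, exists k, forall j, (k <= j)%nat -> Nat.iter j h x < K.
Proof.
  intros Hc Hy x K.
  assert (Mono : forall j j', (j <= j')%nat -> Nat.iter j' h x <= Nat.iter j h x).
  { intros j j' Hj. induction Hj; [lra|]. simpl. pose proof (Hy (Nat.iter m h x)). lra. }
  destruct (classic (exists k, Nat.iter k h x < K)) as [[k Hk]|Hno].
  - exists k. intros j Hj. pose proof (Mono k j Hj). lra.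
  - exfalso.
    assert (Hb : forall k, K <= Nat.iter k h x).
    { intro k. destruct (Rle_dec K (Nat.iter k h x)); auto. exfalso. apply Hno. exists k. lra. }
    destruct (decreasing_cv (fun n => Nat.iter n h x)) as [l Hl].
    + intro n. simpl. pose proof (Hy (Nat.iter n h x)). lra.
    + exists (- K). intros z [i ->]. unfold opp_seq. pose proof (Hb i). lra.
    + pose proof (fix_of_cv h (fun n => Nat.iter n h x) l Hc (fun n => eq_refl) Hl).
      pose proof (Hy l). lra.
Qed.

Section Esc.
Variables f g : R -> R.
Hypothesis gf : forall x, g (f x) = x.
Hypothesis fg : forall x, f (g x) = x.
Hypothesis fc : continuity f.
Hypothesis gc : continuity g.
Hypothesis nofix : forall y, f y <> y.

Lemma orbit_escape a : forall K, exists N : nat, forall n : Z, (Z.of_nat N < Z.abs n)%Z -> K < Rabs (iterZ f g n a).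
Proof.
  intro K.
  assert (gnf : forall y, g y <> y). { intros y H. apply (nofix y). rewrite <- H at 1. apply fg. }
  assert (Hfin : forall k1 k2 : nat,
     (forall j, (k1 <= j)%nat -> K < Rabs (Nat.iter j f a)) ->
     (forall j, (k2 <= j)%nat -> K < Rabs (Nat.iter j g a)) ->
     exists N : nat, forall n : Z, (Z.of_nat N < Z.abs n)%Z -> K < Rabs (iterZ f g n a)).
  { intros k1 k2 H1 H2. exists (Nat.max k1 k2). intros n Hn.
    destruct (Z_nat_cases n) as [j [-> | ->]].
    - rewrite iterZ_pos_nat. apply H1. lia.
    - rewrite iterZ_neg_nat. apply H2. lia. }
  destruct (sign_const f fc nofix) as [Hup|Hdn].
  - assert (Hg : forall y, g y < y). { intro y. pose proof (Hup (g y)). rewrite fg in H. exact H. }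
    destruct (L1 f fc Hup a K) as [k1 H1]. destruct (L2 g gc Hg a (-K)) as [k2 H2].
    apply (Hfin k1 k2).
    + intros j Hj. specialize (H1 j Hj). eapply Rlt_le_trans; [exact H1| apply Rle_abs].
    + intros j Hj. specialize (H2 j Hj). rewrite <- Rabs_Ropp. eapply Rlt_le_trans; [|apply Rle_abs]. lra.
  - assert (Hg : forall y, y < g y). { intro y. pose proof (Hdn (g y)). rewrite fg in H. exact H. }
    destruct (L2 f fc Hdn a (-K)) as [k1 H1]. destruct (L1 g gc Hg a K) as [k2 H2].
    apply (Hfin k1 k2).
    + intros j Hj. specialize (H1 j Hj). rewrite <- Rabs_Ropp. eapply Rlt_le_trans; [|apply Rle_abs]. lra.
    + intros j Hj. specialize (H2 j Hj). eapply Rlt_le_trans; [exact H2| apply Rle_abs].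
Qed.
End Esc.

Lemma zero_small x : (forall k : nat, Rabs x < / (INR k + 1)) -> x = 0.
Proof.
  intro H. destruct (Req_dec x 0) as [|Hx]; auto. exfalso.
  assert (Hp : 0 < Rabs x) by (apply Rabs_pos_lt; auto).
  destruct (archimed_cor1 (Rabs x) Hp) as [N [HN HN0]].
  specialize (H N). assert (0 < INR N) by (apply lt_0_INR; lia).
  assert (/ (INR N + 1) < / INR N) by (apply Rinv_lt_contravar; [nra| lra]). lra.
Qed.

Section Exist.
Variables f g : R -> R.
Hypothesis Hhomeo : homeo_with_inverse f g.
Hypothesis HTA : topologically_anosov f g.

Lemma existence : exists p, f p = p.
Proof.
  destruct Hhomeo as [fc [gc [gf fg]]].
  destruct HTA as [[c [[cc cpos] Hexp]] Hsh].
  apply NNPP. intro Hno.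
  assert (nofix : forall y, f y <> y) by (intros y Hy; apply Hno; exists y; exact Hy).
  set (p := fun n => iterZ f g n 0).
  assert (Hex : forall n, exists e, 0 < e /\ forall w, Rabs (w - p n) < e ->
             Rabs (iterZ f g (- n) w) < / (INR (Z.abs_nat n) + 1)).
  { intro n. assert (Hpos : 0 < / (INR (Z.abs_nat n) + 1)).
    { apply Rinv_0_lt_compat. pose proof (pos_INR (Z.abs_nat n)). lra. }
    destruct (cont_to_ed _ _ (iterZ_cont f g (- n) fc gc (p n)) _ Hpos) as [d [Hd Hdd]].
    exists d. split; auto. intros w Hw. specialize (Hdd w Hw).
    unfold p in Hdd. rewrite iterZ_inv in Hdd by auto. rewrite Rminus_0_r in Hdd. exact Hdd. }
  set (E := fun n => proj1_sig (constructive_indefinite_description _ (Hex n))).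
  assert (HE : forall n, 0 < E n /\ forall w, Rabs (w - p n) < E n ->
             Rabs (iterZ f g (- n) w) < / (INR (Z.abs_nat n) + 1)).
  { intro n. unfold E. destruct constructive_indefinite_description as [e He]. exact He. }
  destruct (small_at_points p E (fun n => proj1 (HE n)) (ltac:(eapply orbit_escape; eauto) : forall K, exists N : nat, forall n : Z, (Z.of_nat N < Z.abs n)%Z -> K < Rabs (p n)))
    as [phi [phic [phipos phile]]].
  set (eps := fun y => Rmin (c y) (phi y)).
  assert (epsc : pos_cont_fun eps).
  { split. apply cont_min; auto. intro y. apply Rmin_pos; auto. }
  assert (eps_c : forall y, eps y <= c y) by (intro; apply Rmin_l).
  assert (eps_p : forall n, eps (p n) <= E n).
  { intro n. eapply Rle_trans. apply Rmin_r. apply phile. }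
  assert (force : forall x, (forall k : nat, exists n, (k <= Z.abs_nat n)%nat /\
                     Rabs (p n - iterZ f g n x) < eps (p n)) -> x = 0).
  { intros x Hx. apply zero_small. intro k. destruct (Hx k) as [n [Hkn Hn]].
    assert (H1 : Rabs (iterZ f g n x - p n) < E n).
    { rewrite Rabs_minus_sym. eapply Rlt_le_trans; [exact Hn| apply eps_p]. }
    pose proof (proj2 (HE n) _ H1) as H2. rewrite iterZ_inv in H2 by auto.
    eapply Rlt_le_trans; [exact H2|]. apply Rinv_le_contravar.
    - pose proof (pos_INR k). lra.
    - apply le_INR in Hkn. lra. }
  destruct (Hsh eps epsc) as [delta [[dc dpos] Hdel]].
  set (fa := f 0).
  destruct (cont_to_ed _ _ (dc fa) (delta fa / 2) ltac:(pose proof (dpos fa); lra)) as [r [Hr Hrr]].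
  set (t := Rmin r (delta fa) / 2).
  assert (Ht0 : 0 < t) by (unfold t; pose proof (Rmin_pos r (delta fa) Hr (dpos fa)); lra).
  assert (Ht1 : t <= delta fa / 2) by (unfold t; pose proof (Rmin_r r (delta fa)); lra).
  assert (Ht2 : t < r) by (unfold t; pose proof (Rmin_l r (delta fa)); lra).
  set (b := fa + t).
  assert (Htb : t < delta b).
  { assert (Rabs (b - fa) < r) by (unfold b; replace (fa + t - fa) with t by ring; rewrite Rabs_pos_eq; lra).
    specialize (Hrr b H). pose proof (Rabs_def2 _ _ Hrr). lra. }
  assert (Hbfa : b <> fa) by (unfold b; lra).
  assert (Hsucc : forall n x, iterZ f g (n + 1) x = f (iterZ f g n x)) by (intros; apply iterZ_succ; auto).
  set (xs := fun n => if (n <=? 0)%Z then p n else iterZ f g (n - 1) b).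
  assert (HP : forall n : Z, Rabs (f (xs n) - xs (n + 1)%Z) < delta (f (xs n))).
  { intro n. unfold xs. destruct (Z.le_gt_cases n (-1)) as [Hn|Hn].
    - rewrite (proj2 (Z.leb_le n 0)) by lia. rewrite (proj2 (Z.leb_le (n+1) 0)) by lia.
      unfold p. rewrite Hsucc, Rminus_diag, Rabs_R0. apply dpos.
    - destruct (Z.eq_dec n 0) as [->|Hn0].
      + simpl. unfold p, b. simpl. fold fa. replace (fa - (fa + t)) with (- t) by ring.
        rewrite Rabs_Ropp, Rabs_pos_eq by lra. lra.
      + rewrite (proj2 (Z.leb_gt n 0)) by lia. rewrite (proj2 (Z.leb_gt (n+1) 0)) by lia.
        replace (n + 1 - 1)%Z with ((n - 1) + 1)%Z by lia.
        rewrite Hsucc, Rminus_diag, Rabs_R0. apply dpos. }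
  destruct (Hdel xs HP) as [x Hx].
  assert (Hx0 : x = 0).
  { apply force. intro k. exists (- Z.of_nat k)%Z. split; [lia|].
    specialize (Hx (- Z.of_nat k)%Z). unfold xs in Hx.
    rewrite (proj2 (Z.leb_le _ 0)) in Hx by lia. exact Hx. }
  subst x.
  set (ys := fun n => if (n <=? 0)%Z then iterZ f g (n - 1) b else p n).
  assert (HS : forall n : Z, Rabs (f (ys n) - ys (n + 1)%Z) < delta (f (ys n))).
  { intro n. unfold ys. destruct (Z.le_gt_cases n (-1)) as [Hn|Hn].
    - rewrite (proj2 (Z.leb_le n 0)) by lia. rewrite (proj2 (Z.leb_le (n+1) 0)) by lia.
      replace (n + 1 - 1)%Z with ((n - 1) + 1)%Z by lia.
      rewrite Hsucc, Rminus_diag, Rabs_R0. apply dpos.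
    - destruct (Z.eq_dec n 0) as [->|Hn0].
      + simpl. unfold p. simpl. rewrite fg. fold fa. unfold b.
        replace (fa + t - fa) with t by ring. rewrite Rabs_pos_eq by lra. exact Htb.
      + rewrite (proj2 (Z.leb_gt n 0)) by lia. rewrite (proj2 (Z.leb_gt (n+1) 0)) by lia.
        unfold p. rewrite Hsucc, Rminus_diag, Rabs_R0. apply dpos. }
  destruct (Hdel ys HS) as [z Hz].
  assert (Hz0 : z = 0).
  { apply force. intro k. exists (Z.of_nat (S k)). split; [lia|].
    specialize (Hz (Z.of_nat (S k))). unfold ys in Hz.
    rewrite (proj2 (Z.leb_gt _ 0)) in Hz by lia. exact Hz. }
  subst z.
  assert (Hall : forall m, Rabs (iterZ f g m b - iterZ f g m fa) <= c (iterZ f g m b)).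
  { intro m. replace (iterZ f g m fa) with (iterZ f g (m + 1) 0)
      by (rewrite iterZ_add by auto; reflexivity).
    destruct (Z.le_gt_cases m (-1)) as [Hm|Hm].
    - specialize (Hz (m + 1)%Z). unfold ys in Hz.
      rewrite (proj2 (Z.leb_le _ 0)) in Hz by lia.
      replace (m + 1 - 1)%Z with m in Hz by lia. apply Rlt_le. eapply Rlt_le_trans; [exact Hz| apply eps_c].
    - specialize (Hx (m + 1)%Z). unfold xs in Hx.
      rewrite (proj2 (Z.leb_gt _ 0)) in Hx by lia.
      replace (m + 1 - 1)%Z with m in Hx by lia. apply Rlt_le. eapply Rlt_le_trans; [exact Hx| apply eps_c]. }
  destruct (Hexp b fa Hbfa) as [k Hk]. specialize (Hall k). lra.
Qed.
End Exist.

Definition incr (h : R -> R) := forall x y, x < y -> h x < h y.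

Lemma mono_aux h : continuity h -> (forall x y, h x = h y -> x = y) -> h 0 < h 1 -> incr h.
Proof.
  intros Hc Hi H01 x y Hxy.
  destruct (Rlt_dec (h x) (h y)) as [|Hn]; auto. exfalso.
  set (H := fun s => h ((1 - s) * 1 + s * y) - h ((1 - s) * 0 + s * x)).
  assert (HC : continuity H).
  { unfold H. apply continuity_minus.
    - apply (continuity_comp (fun s => (1 - s) * 1 + s * y) h); auto.
      apply continuity_plus. apply continuity_mult. apply continuity_minus. apply continuity_const. intros a b; reflexivity. apply cont_id. apply continuity_const. intros a b; reflexivity.
      apply continuity_mult. apply cont_id. apply continuity_const. intros a b; reflexivity.
    - apply (continuity_comp (fun s => (1 - s) * 0 + s * x) h); auto.
      apply continuity_plus. apply continuity_mult. apply continuity_minus. apply continuity_const. intros a b; reflexivity. apply cont_id. apply continuity_const. intros a b; reflexivity.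
      apply continuity_mult. apply cont_id. apply continuity_const. intros a b; reflexivity. }
  destruct (IVT_cor H 0 1 HC ltac:(lra)) as [s [Hs Hs0]].
  { unfold H; cbv beta. replace ((1 - 0) * 1 + 0 * y) with 1 by ring. replace ((1 - 0) * 0 + 0 * x) with 0 by ring.
    replace ((1 - 1) * 1 + 1 * y) with y by ring. replace ((1 - 1) * 0 + 1 * x) with x by ring.
    assert (h y - h x <= 0) by lra. assert (0 < h 1 - h 0) by lra. nra. }
  unfold H in Hs0. assert (Heq := Hi _ _ (Rminus_diag_uniq _ _ Hs0)).
  assert (0 <= s * (y - x)) by nra. assert (s = 1) by nra. subst s. lra.
Qed.

Lemma mono h : continuity h -> (forall x y, h x = h y -> x = y) ->
  incr h \/ incr (fun x => - h x).
Proof.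
  intros Hc Hi. destruct (Rlt_dec (h 0) (h 1)) as [H|H].
  - left. apply mono_aux; auto.
  - right. apply mono_aux.
    + apply continuity_opp. exact Hc.
    + intros x y Hxy. apply Hi. lra.
    + assert (h 0 <> h 1) by (intro E; apply Hi in E; lra). lra.
Qed.

Lemma incr_le h x y : incr h -> x <= y -> h x <= h y.
Proof. intros Hh Hxy. destruct Hxy as [Hlt| ->]; [apply Rlt_le, Hh; auto| lra]. Qed.

Lemma iter_incr h n : incr h -> incr (fun x => Nat.iter n h x).
Proof. intros Hh. induction n; intros x y Hxy; simpl; auto. Qed.

Lemma gap_lemma h x lo hi : incr h -> (forall j, lo <= Nat.iter j h x <= hi) ->
  forall eps, 0 < eps -> exists J, forall j, (J <= j)%nat -> Rabs (Nat.iter (S j) h x - Nat.iter j h x) < eps.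
Proof.
  intros Hh Hb eps He.
  assert (Hcv : exists l, Un_cv (fun n => Nat.iter n h x) l).
  { destruct (Rle_dec x (h x)) as [Hx|Hx].
    - assert (G : Un_growing (fun n => Nat.iter n h x)).
      { intro n. induction n; simpl in *. lra. pose proof (incr_le h _ _ Hh IHn). lra. }
      destruct (growing_cv _ G) as [l Hl]. { exists hi. intros z [i ->]. apply Hb. }
      exists l; exact Hl.
    - assert (G : Un_decreasing (fun n => Nat.iter n h x)).
      { intro n. induction n; simpl in *. lra. pose proof (incr_le h _ _ Hh IHn). lra. }
      destruct (decreasing_cv _ G) as [l Hl]. { exists (- lo). intros z [i ->]. unfold opp_seq. pose proof (Hb i). lra. }
      exists l; exact Hl. }
  destruct Hcv as [l Hl]. destruct (Hl (eps / 2) ltac:(lra)) as [N HN].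
  exists N. intros j Hj. pose proof (HN j ltac:(lia)) as A. pose proof (HN (S j) ltac:(lia)) as B.
  unfold R_dist in *. simpl in *.
  pose proof (Rabs_def2 _ _ A). pose proof (Rabs_def2 _ _ B). apply Rabs_def1; lra.
Qed.

Lemma between_lemma (F : R -> R) x w s : incr F -> x <> w -> 0 < s < 1 ->
  Rabs (F (x + s * (w - x)) - F x) < Rabs (F w - F x).
Proof.
  intros HF Hxw Hs. destruct (Rlt_dec x w) as [H|H].
  - assert (A : F x < F (x + s * (w - x))) by (apply HF; nra).
    assert (B : F (x + s * (w - x)) < F w) by (apply HF; nra).
    rewrite !Rabs_pos_eq by lra. lra.
  - assert (A : F (x + s * (w - x)) < F x) by (apply HF; nra).
    assert (B : F w < F (x + s * (w - x))) by (apply HF; nra).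
    rewrite !Rabs_left by lra. lra.
Qed.

Section Uniq.
Variables f g : R -> R.
Hypothesis Hhomeo : homeo_with_inverse f g.
Hypothesis HTA : topologically_anosov f g.

Lemma no_two_fixed p q : f p = p -> f q = q -> p < q -> False.
Proof.
  destruct Hhomeo as [fc [gc [gf fg]]].
  destruct HTA as [[c [[cc cpos] Hexp]] _].
  intros Hp Hq Hpq.
  assert (finj : forall x y, f x = f y -> x = y) by (intros x y E; rewrite <- (gf x), <- (gf y), E; reflexivity).
  destruct (mono f fc finj) as [finc|fdec].
  2:{ specialize (fdec p q Hpq). simpl in fdec. lra. }
  assert (ginc : incr g).
  { intros x y Hxy. destruct (Rlt_dec (g x) (g y)) as [|H]; auto. exfalso.
    destruct (Req_dec (g x) (g y)) as [E|E].
    - apply (f_equal f) in E. rewrite !fg in E. lra.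
    - assert (g y < g x) by lra. apply finc in H0. rewrite !fg in H0. lra. }
  assert (itinc : forall k, incr (iterZ f g k)).
  { intro k. destruct k; unfold iterZ.
    - intros x y H; exact H.
    - apply iter_incr; auto.
    - apply iter_incr; auto. }
  destruct (classic (forall y, p <= y <= q -> f y = y)) as [Hall|Hnot].
  - set (y := p + Rmin (q - p) (c p) / 2).
    assert (Hm := Rmin_pos (q - p) (c p) ltac:(lra) (cpos p)).
    assert (Hm1 := Rmin_l (q - p) (c p)). assert (Hm2 := Rmin_r (q - p) (c p)).
    assert (Hy : f y = y) by (apply Hall; unfold y; lra).
    destruct (Hexp p y ltac:(unfold y; lra)) as [k Hk].
    rewrite !iterZ_fix in Hk by auto.
    unfold y in Hk. replace (p - (p + Rmin (q - p) (c p) / 2)) with (- (Rmin (q - p) (c p) / 2)) in Hk by ring.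
    rewrite Rabs_Ropp, Rabs_pos_eq in Hk by lra. lra.
  - apply not_all_ex_not in Hnot. destruct Hnot as [x Hx].
    apply imply_to_and in Hx. destruct Hx as [[Hpx Hxq] Hfx].
    assert (Hpx' : p < x) by (destruct Hpx as [ | <- ]; auto; contradiction).
    assert (Hxq' : x < q) by (destruct Hxq as [ | -> ]; auto; contradiction).
    assert (Horb : forall k, p < iterZ f g k x < q).
    { intro k. rewrite <- (iterZ_fix f g gf fg k p Hp) at 1. rewrite <- (iterZ_fix f g gf fg k q Hq).
      split; apply itinc; auto. }
    destruct (continuity_ab_min c p q ltac:(lra) (fun y _ => cc y)) as [mx [Hmx _]].
    set (m := c mx). assert (Hm0 : 0 < m) by apply cpos.
    assert (Hmle : forall k, m <= c (iterZ f g k x)).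
    { intro k. apply Hmx. pose proof (Horb k). lra. }
    destruct (gap_lemma f x p q finc
      (fun j => ltac:(pose proof (Horb (Z.of_nat j)) as H; rewrite iterZ_pos_nat in H; lra)) m Hm0) as [J1 HJ1].
    destruct (gap_lemma g x p q ginc
      (fun j => ltac:(pose proof (Horb (- Z.of_nat j)%Z) as H; rewrite iterZ_neg_nat in H; lra)) m Hm0) as [J2 HJ2].
    set (K := Nat.max J1 (S J2)).
    assert (Hgap : forall k, (Z.of_nat K < Z.abs k)%Z -> Rabs (iterZ f g (k + 1) x - iterZ f g k x) < m).
    { intros k Hk. destruct (Z_nat_cases k) as [j [-> | ->]].
      - replace (Z.of_nat j + 1)%Z with (Z.of_nat (S j)) by lia. rewrite !iterZ_pos_nat.
        apply HJ1. lia.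
      - destruct j as [|j']; [lia|].
        replace (- Z.of_nat (S j') + 1)%Z with (- Z.of_nat j')%Z by lia. rewrite !iterZ_neg_nat.
        rewrite Rabs_minus_sym. apply HJ2. lia. }
    assert (Hfin : forall N : nat, exists d, 0 < d /\ forall y, Rabs (y - x) < d ->
        forall k, (Z.abs k <= Z.of_nat N)%Z -> Rabs (iterZ f g k y - iterZ f g k x) < m).
    { induction N as [|N IH].
      - exists m. split; [lra|]. intros y Hy k Hk. assert (k = 0%Z) by lia. subst k. simpl. exact Hy.
      - destruct IH as [d0 [Hd0 P0]].
        destruct (cont_to_ed _ _ (iterZ_cont f g (Z.of_nat (S N)) fc gc x) m Hm0) as [d1 [Hd1 P1]].
        destruct (cont_to_ed _ _ (iterZ_cont f g (- Z.of_nat (S N)) fc gc x) m Hm0) as [d2 [Hd2 P2]].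
        exists (Rmin d0 (Rmin d1 d2)). split. { apply Rmin_pos; [|apply Rmin_pos]; auto. }
        intros y Hy k Hk.
        pose proof (Rmin_l d0 (Rmin d1 d2)). pose proof (Rmin_r d0 (Rmin d1 d2)).
        pose proof (Rmin_l d1 d2). pose proof (Rmin_r d1 d2).
        destruct (Z.eq_dec (Z.abs k) (Z.of_nat (S N))) as [E|E].
        + destruct (Z.abs_spec k) as [[_ H']|[_ H']].
          * replace k with (Z.of_nat (S N)) by lia. apply P1. lra.
          * replace k with (- Z.of_nat (S N))%Z by lia. apply P2. lra.
        + apply P0; [lra| lia]. }
    destruct (Hfin K) as [d [Hd Pd]].
    assert (Hfxx : 0 < Rabs (f x - x)) by (apply Rabs_pos_lt; intro E; apply Hfx; lra).
    set (s := Rmin (1/2) (d / (2 * Rabs (f x - x)))).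
    assert (Hs0 : 0 < s) by (apply Rmin_pos; [lra| apply Rdiv_lt_0_compat; lra]).
    assert (Hs1 : s <= 1/2) by apply Rmin_l.
    assert (Hs2 : s <= d / (2 * Rabs (f x - x))) by apply Rmin_r.
    set (y := x + s * (f x - x)).
    assert (Hyx : Rabs (y - x) < d).
    { unfold y. replace (x + s * (f x - x) - x) with (s * (f x - x)) by ring.
      rewrite Rabs_mult, (Rabs_pos_eq s) by lra.
      apply (Rmult_le_compat_r (Rabs (f x - x))) in Hs2; [|lra].
      replace (d / (2 * Rabs (f x - x)) * Rabs (f x - x)) with (d / 2) in Hs2 by (field; lra). lra. }
    assert (Hxy : x <> y).
    { intro E. unfold y in E. assert (s * (f x - x) = 0) by lra.
      apply Rmult_integral in H. destruct H; [lra|]. apply Hfx. lra. }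
    destruct (Hexp x y Hxy) as [k Hk].
    assert (Hsmall : Rabs (iterZ f g k x - iterZ f g k y) < m).
    { rewrite Rabs_minus_sym.
      destruct (Z_le_gt_dec (Z.abs k) (Z.of_nat K)) as [Hk'|Hk'].
      - apply Pd; auto.
      - eapply Rlt_trans; [| apply (Hgap k); lia].
        replace (iterZ f g (k + 1) x) with (iterZ f g k (f x))
          by (rewrite iterZ_add by auto; reflexivity).
        unfold y. apply between_lemma; auto. lra. }
    pose proof (Hmle k). lra.
Qed.
End Uniq.

Theorem mainTheorem15 (f g : R -> R)
  (Hhomeo : homeo_with_inverse f g)
  (HTA : topologically_anosov f g) :
  exists! p : R, f p = p.
Proof.
  destruct (existence f g Hhomeo HTA) as [p Hp].
  exists p. split; [exact Hp|].
  intros y Hy. destruct (Rtotal_order p y) as [H|[H|H]]; auto.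
  - exfalso. exact (no_two_fixed f g Hhomeo HTA p y Hp Hy H).
  - exfalso. exact (no_two_fixed f g Hhomeo HTA y p Hy Hp H).
Qed.
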